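(* Let $G$ be a bipartite edge-magic simple graph with stable sets $X$ and $Y$, and suppose $G\cong H_1\oplus H_2$ is a decomposition of $G$. Then $\lim_{n\to\infty}|\tau_{S_{2n}(G;H_1,H_2)}|=\infty$.
   Context: For a $(p,q)$-graph $G$ ($p$ vertices, $q$ edges), an edge-magic labeling is a bijection $f:V(G)\cup E(G)\to[1,p+q]$ such that $f(x)+f(xy)+f(y)$ equals a constant (the valence) for every edge $xy$. For a graph $H$, $\tau_H$ is the set of integers that are valences of edge-magic labelings of $H$. A decomposition $G\cong H_1\oplus H_2$ means $H_1,H_2$ are subgraphs of $G$ whose edge sets partition $E(G)$. Writing $X=\{x_i\}_{i=1}^s$, $Y=\{y_j\}_{j=1}^t$, $S_{2n}(G;H_1,H_2)$ is the graph with vertex set $X\cup Y\cup\bigcup_{k=1}^n X_k\cup\bigcup_{k=1}^n Y_k$, where $X_k=\{x_i^k\}_{i=1}^s$, $Y_k=\{y_j^k\}_{j=1}^t$ are new vertices, and edge set $E(G)\cup\{x_iy_j^k: x_iy_j\in E(H_1),\,k\in[1,n]\}\cup\{x_i^ky_j: x_iy_j\in E(H_2),\,k\in[1,n]\}$. *)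

(* Defs.v *)
From mathcomp Require Import all_boot.
Set Implicit Arguments. Unset Strict Implicit. Unset Printing Implicit Defensive.

(* A simple graph on a finite vertex type V is given by an adjacency relation r
   (in our uses r is symmetric and irreflexive by construction). *)
Definition edges (V : finType) (r : rel V) : {set {set V}} :=
  [set A : {set V} | [exists x : V, exists y : V, r x y && (A == [set x; y])]].

Definition lab_dom (V : finType) (r : rel V) : finType :=
  (V + {A : {set V} | A \in edges r})%type.

(* k is a valence of an edge-magic labeling: a bijection
   f : V ∪ E -> [1, p+q] (encoded as a bijection onto 'I_(p+q), label = f + 1)
   with f(x) + f(xy) + f(y) = k for every edge xy. *)
Definition is_valence (V : finType) (r : rel V) (k : nat) : Prop :=
  exists f : lab_dom r -> 'I_#|{: lab_dom r}|,
    bijective f /\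
    forall (x y : V) (hxy : [set x; y] \in edges r), r x y ->
      (f (inl x)).+1 + (f (inr (exist _ [set x; y] hxy))).+1 + (f (inl y)).+1 = k.

Definition edge_magic (V : finType) (r : rel V) : Prop := exists k, is_valence r k.

Definition tau_card_ge (V : finType) (r : rel V) (M : nat) : Prop :=
  exists sq : seq nat, [/\ uniq sq, M <= size sq & forall k, k \in sq -> is_valence r k].

(* Bipartite graph G with stable sets X = 'I_s, Y = 'I_t and edges x_i y_j for E i j. *)
Definition bip_adj (s t : nat) (E : 'I_s -> 'I_t -> bool) : rel ('I_s + 'I_t) :=
  fun u v => match u, v with
             | inl i, inr j => E i j
             | inr j, inl i => E i j
             | _, _ => false
             end.

(* Vertices of S_{2n}(G;H1,H2): (w, None) is the original vertex w of G,
   (w, Some k) is the copy w^k, k in [1,n] encoded as 'I_n. *)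
Definition SV (s t n : nat) : finType := (('I_s + 'I_t) * option 'I_n)%type.

Definition S2n_dir (s t n : nat) (E E1 E2 : 'I_s -> 'I_t -> bool) : rel (SV s t n) :=
  fun u v => match u, v with
             | (inl i, None), (inr j, None) => E i j
             | (inl i, None), (inr j, Some _) => E1 i j     (* x_i y_j^k, x_iy_j in H1 *)
             | (inl i, Some _), (inr j, None) => E2 i j     (* x_i^k y_j, x_iy_j in H2 *)
             | _, _ => false
             end.

Definition S2n_adj (s t n : nat) (E E1 E2 : 'I_s -> 'I_t -> bool) : rel (SV s t n) :=
  fun u v => S2n_dir E E1 E2 u v || S2n_dir E E1 E2 v u.

(* Main.v *)
Require Import Defs.
From mathcomp Require Import all_boot.
From mathcomp Require Import zify.

Set Implicit Arguments. Unset Strict Implicit. Unset Printing Implicit Defensive.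

Definition sg (c a : nat) : nat := if a == 0 then c else if a == c then 0 else a.

Lemma sgK c : involutive (sg c).
Proof.
move=> a; rewrite /sg.
case: (eqVneq a 0) => [->|a0].
  case: (eqVneq c 0) => [->|c0] //.
  by rewrite eqxx /= ?(negbTE c0) ?eqxx.
case: (eqVneq a c) => [<-|ac].
  by rewrite /= ?(negbTE a0) ?eqxx /= ?eqxx.
by rewrite ?(negbTE a0) ?(negbTE ac) ?(negbTE a0) ?(negbTE ac).
Qed.

Lemma sg_le c n a : c <= n -> a <= n -> sg c a <= n.
Proof. rewrite /sg; case: (a == 0) => //; case: (a == c) => //. Qed.

Definition cp (n : nat) (o : option 'I_n) : nat := if o is Some k then k.+1 else 0.

Lemma cp_le n (o : option 'I_n) : cp o <= n.
Proof. by case: o => [[k hk]|] //=. Qed.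

Lemma cp_inj n : injective (@cp n).
Proof. by case=> [a|] [b|] //= [] /val_inj ->. Qed.

Definition opt (n : nat) (d : nat) : option 'I_n :=
  if d is d'.+1 then insub d' else None.

Lemma cp_opt n d : d <= n -> cp (@opt n d) = d.
Proof. case: d => [|d] //= h. by rewrite insubT. Qed.

Lemma edgesP (V : finType) (r : rel V) A :
  A \in edges r -> exists x y, r x y /\ A = [set x; y].
Proof. rewrite inE => /existsP [x /existsP [y /andP [h /eqP ->]]]; eauto. Qed.

Lemma edgesI (V : finType) (r : rel V) x y : r x y -> [set x; y] \in edges r.
Proof.
move=> h; rewrite inE; apply/existsP; exists x; apply/existsP; exists y.
by rewrite h eqxx.
Qed.

Definition ep s t n (E E1 E2 : 'I_s -> 'I_t -> bool) (A : {set SV s t n}) :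
  option (SV s t n * SV s t n) :=
  [pick p : (SV s t n * SV s t n) | S2n_dir E E1 E2 p.1 p.2 && (A == [set p.1; p.2])].

Lemma dir_sides s t n (E E1 E2 : 'I_s -> 'I_t -> bool) (u v : SV s t n) :
  S2n_dir E E1 E2 u v -> (exists i ox, u = (inl i, ox)) /\ (exists j oy, v = (inr j, oy)).
Proof.
by case: u => [[i|j] [ox|]]; case: v => [[i'|j'] [oy|]] //= _; split; eauto.
Qed.

Lemma dir_set_uniq s t n (E E1 E2 : 'I_s -> 'I_t -> bool) (u v u' v' : SV s t n) :
  S2n_dir E E1 E2 u v -> S2n_dir E E1 E2 u' v' -> [set u; v] = [set u'; v'] ->
  u = u' /\ v = v'.
Proof.
move=> h h'.
have [[i [ox eu]] [j [oy ev]]] := dir_sides h.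
have [[i' [ox' eu']] [j' [oy' ev']]] := dir_sides h'.
subst => e.
have hu : (inl i, ox) \in [set (inl i', ox'); (inr j', oy')] by rewrite -e set21.
have hv : (inr j, oy) \in [set (inl i', ox'); (inr j', oy')] by rewrite -e set22.
move: hu hv; rewrite !in_set2 => /orP [/eqP ->| /eqP //] /orP [/eqP //| /eqP ->] //.
Qed.

Lemma ep_spec s t n (E E1 E2 : 'I_s -> 'I_t -> bool) (u v : SV s t n) A :
  S2n_dir E E1 E2 u v -> A = [set u; v] -> ep E E1 E2 A = Some (u, v).
Proof.
move=> h ->; rewrite /ep; case: pickP => [[u' v'] /= /andP [h' /eqP e]|H].
- by have [-> ->] := dir_set_uniq h h' e.
- by have := H (u, v); rewrite /= h eqxx.
Qed.

Definition fe s t (E : 'I_s -> 'I_t -> bool) (g : lab_dom (bip_adj E) -> nat) i j : nat :=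
  match (insub [set (inl i : 'I_s + 'I_t); inr j] :
           option {A : {set 'I_s + 'I_t} | A \in edges (bip_adj E)}) with
  | Some a => g (inr a)
  | None => 0
  end.

Lemma fe_eq s t (E : 'I_s -> 'I_t -> bool) g i j
  (h : [set (inl i : 'I_s + 'I_t); inr j] \in edges (bip_adj E)) :
  fe g i j = g (inr (exist (fun A => A \in edges (bip_adj E)) _ h)).
Proof. by rewrite /fe insubT. Qed.

Definition Lab s t n (E E1 E2 : 'I_s -> 'I_t -> bool) (g : lab_dom (bip_adj E) -> nat)
  (c : nat) (w : lab_dom (@S2n_adj s t n E E1 E2)) : nat :=
  match w with
  | inl (v, o) => n.+1 * g (inl v) + sg c (cp o)
  | inr A => match ep E E1 E2 (val A) with
             | Some (u, v) => match u.1, v.1 with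
                              | inl i, inr j => n.+1 * fe g i j + (n - sg c (cp u.2 + cp v.2))
                              | _, _ => 0 end
             | None => 0 end
  end.

Lemma Lab_edge s t n (E E1 E2 : 'I_s -> 'I_t -> bool) g c i j ox oy
  (h : [set ((inl i, ox) : SV s t n); (inr j, oy)] \in edges (S2n_adj E E1 E2)) :
  S2n_dir E E1 E2 (inl i, ox) (inr j, oy) ->
  Lab g c (inr (exist (fun A => A \in edges (S2n_adj E E1 E2)) _ h)) = n.+1 * fe g i j + (n - sg c (cp ox + cp oy)).
Proof. by move=> hd; rewrite /Lab /= (ep_spec hd erefl). Qed.

Lemma dir_E s t n (E E1 E2 : 'I_s -> 'I_t -> bool)
  (Hdec : forall i j, E i j = E1 i j || E2 i j) i j (ox oy : option 'I_n) :
  S2n_dir E E1 E2 (inl i, ox) (inr j, oy) -> E i j.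
Proof. case: ox => [a|]; case: oy => [b|] //= h; by rewrite // Hdec h ?orbT. Qed.

Lemma Lab_edge_gen s t n (E E1 E2 : 'I_s -> 'I_t -> bool)
  (Hdec : forall i j, E i j = E1 i j || E2 i j) g c
  (a : {A : {set SV s t n} | A \in edges (S2n_adj E E1 E2)}) :
  exists i j ox oy, exists hG : [set (inl i : 'I_s + 'I_t); inr j] \in edges (bip_adj E),
    [/\ val a = [set (inl i, ox); (inr j, oy)], S2n_dir E E1 E2 (inl i, ox) (inr j, oy) &
    Lab g c (inr a) = n.+1 * g (inr (exist (fun A => A \in edges (bip_adj E)) _ hG)) + (n - sg c (cp ox + cp oy))].
Proof.
case: a => A hA.
have [x [y [hxy eA]]] := edgesP hA.
have [u [v [huv eA']]] : exists u v, S2n_dir E E1 E2 u v /\ A = [set u; v].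
  move: hxy; rewrite /S2n_adj => /orP [h|h]; [exists x, y | exists y, x]; split => //.
  by rewrite setUC.
have [[i [ox eu]] [j [oy ev]]] := dir_sides huv; subst u v.
have hE := dir_E Hdec huv.
have hG : [set (inl i : 'I_s + 'I_t); inr j] \in edges (bip_adj E) by apply: edgesI.
exists i, j, ox, oy, hG; split => //.
by rewrite /Lab /= (ep_spec huv eA') /= (fe_eq g hG).
Qed.

Lemma dm n a b r r' : r <= n -> r' <= n -> n.+1 * a + r = n.+1 * b + r' -> a = b /\ r = r'.
Proof.
move=> hr hr' e.
have ha : a = b.
  have := congr1 (fun x => x %/ n.+1) e => /=.
  by rewrite ![n.+1 * _]mulnC !divnMDl // !divn_small ?ltnS // !addn0.
subst; split => //; lia.
Qed.

Lemma lt_mix n a b r : a < b -> r <= n -> n.+1 * a + r < n.+1 * b.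
Proof.
move=> hab hr; apply: (@leq_trans (n.+1 * a.+1)).
  rewrite mulnS; lia.
by rewrite leq_mul2l.
Qed.

Lemma set2_lr (A B : finType) (i i' : A) (j j' : B) :
  [set inl i; inr j] = [set inl i'; inr j'] :> {set A + B} -> i = i' /\ j = j'.
Proof.
move=> e.
have hu : (inl i : A + B) \in [set inl i'; inr j'] by rewrite -e set21.
have hv : (inr j : A + B) \in [set inl i'; inr j'] by rewrite -e set22.
by move: hu hv; rewrite !in_set2 => /orP [/eqP [->]| /eqP //] /orP [/eqP //| /eqP [->]].
Qed.

Lemma dir_cp s t n (E E1 E2 : 'I_s -> 'I_t -> bool) i j (ox oy : option 'I_n) :
  S2n_dir E E1 E2 (inl i, ox) (inr j, oy) -> (cp ox = 0 \/ cp oy = 0) /\ cp ox + cp oy <= n.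
Proof.
case: ox => [a|]; case: oy => [b|] //= _; rewrite ?addn0 ?add0n; split; auto; exact: ltn_ord.
Qed.

Lemma dir_eq s t n (E E1 E2 : 'I_s -> 'I_t -> bool)
  (Hdisj : forall i j, ~~ (E1 i j && E2 i j)) i j (ox oy ox' oy' : option 'I_n) :
  S2n_dir E E1 E2 (inl i, ox) (inr j, oy) -> S2n_dir E E1 E2 (inl i, ox') (inr j, oy') ->
  cp ox + cp oy = cp ox' + cp oy' -> ox = ox' /\ oy = oy'.
Proof.
have := Hdisj i j.
case: ox => [a|]; case: oy => [b|]; case: ox' => [a'|]; case: oy' => [b'|] //=;
  rewrite ?addn0 ?add0n => hd h1 h2 e //.
- by move: e => [/val_inj ->].
- by move: hd; rewrite h1 h2.
- by move: hd; rewrite h1 h2.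
- by move: e => [/val_inj ->].
Qed.

Lemma S_valence s t n (E E1 E2 : 'I_s -> 'I_t -> bool)
  (Hdec : forall i j, E i j = E1 i j || E2 i j)
  (Hdisj : forall i j, ~~ (E1 i j && E2 i j)) k c :
  c <= n -> is_valence (bip_adj E) k ->
  is_valence (@S2n_adj s t n E E1 E2) (n.+1 * (k - 3) + c + n + 3).
Proof.
move=> Hc [f [fbij fval]].
set P := #|{: lab_dom (bip_adj E)}|.
pose g z := nat_of_ord (f z).
have ginj : injective g := fun a b h => bij_inj fbij (val_inj h).
have sgle a : a <= n -> sg c a <= n := sg_le Hc.
have Llt (w : lab_dom (@S2n_adj s t n E E1 E2)) : Lab g c w < n.+1 * P.
  destruct w as [[v o]|a].
  - rewrite /=; by apply: lt_mix; [apply: ltn_ord | apply: sgle; apply: cp_le].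
  - have [i [j [ox [oy [hG [_ hd ->]]]]]] := Lab_edge_gen Hdec g c a.
    by apply: lt_mix; [apply: ltn_ord | apply: leq_subr].
have Linj : injective (@Lab s t n E E1 E2 g c).
  move=> w w'; destruct w as [[v o]|a]; destruct w' as [[v' o']|a'].
  - rewrite /=; move/dm => [||/ginj [->] /(can_inj (sgK c)) /cp_inj -> //]; apply: sgle; apply: cp_le.
  - have [i [j [ox [oy [hG [_ hd ->]]]]]] := Lab_edge_gen Hdec g c a'.
    rewrite /=; move/dm => [||/ginj //]; [apply: sgle; apply: cp_le | apply: leq_subr].
  - have [i [j [ox [oy [hG [_ hd ->]]]]]] := Lab_edge_gen Hdec g c a.
    rewrite /=; move/dm => [||/ginj //]; [apply: leq_subr | apply: sgle; apply: cp_le].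
  - have [i [j [ox [oy [hG [ea hd ->]]]]]] := Lab_edge_gen Hdec g c a.
    have [i' [j' [ox' [oy' [hG' [ea' hd' ->]]]]]] := Lab_edge_gen Hdec g c a'.
    move/dm => [||/ginj [] /set2_lr [ei ej] e2]; try apply: leq_subr.
    subst i' j'.
    have e3 : cp ox + cp oy = cp ox' + cp oy'.
      apply: (can_inj (sgK c)).
      have [_ /sgle h1] := dir_cp hd; have [_ /sgle h2] := dir_cp hd'.
      move: e2; lia.
    have [eo1 eo2] := dir_eq Hdisj hd hd' e3; subst.
    by congr inr; apply: val_inj; rewrite ea ea'.
have Lsurj m : m < n.+1 * P -> exists w : lab_dom (@S2n_adj s t n E E1 E2), Lab g c w = m.
  move=> hm.
  have hq : m %/ n.+1 < P by rewrite ltn_divLR // mulnC.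
  have hr : m %% n.+1 <= n by rewrite -ltnS ltn_mod.
  have em : m = n.+1 * (m %/ n.+1) + m %% n.+1 by rewrite mulnC -divn_eq.
  case: fbij => finv fK Kf.
  have gz : g (finv (Ordinal hq)) = m %/ n.+1 by rewrite /g Kf.
  move: gz; case: (finv (Ordinal hq)) => [v|a] gz.
  - exists (inl (v, @opt n (sg c (m %% n.+1)))).
    by rewrite /= cp_opt ?sgle // sgK gz -em.
  - case: a gz => A hA gz.
    have [x [y [hxy eA]]] := edgesP hA.
    have [i [j [hE eA2]]] : exists i j, E i j /\ A = [set inl i; inr j].
      move: hxy eA; case: x => [i|j]; case: y => [i'|j'] //= h ->;
        [exists i, j' | exists i', j; rewrite setUC]; by [].
    move: hA gz; rewrite eA2 => hA gz.
    set d := sg c (n - m %% n.+1).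
    have hd : d <= n by apply: sgle; apply: leq_subr.
    case E1ij: (E1 i j).
    + have hdir : S2n_dir E E1 E2 (inl i, None) (inr j, @opt n d).
        by case: (@opt n d) => [?|] /=; rewrite ?hE ?E1ij.
      have hS : [set ((inl i, None) : SV s t n); (inr j, @opt n d)] \in edges (S2n_adj E E1 E2).
        by apply: edgesI; rewrite /S2n_adj hdir.
      exists (inr (exist (fun A => A \in edges (S2n_adj E E1 E2)) _ hS)).
      rewrite (Lab_edge g c hS hdir) /= cp_opt // add0n /d sgK (fe_eq g hA) gz.
      by rewrite subKn // -em.
    + have E2ij : E2 i j by move: hE; rewrite Hdec E1ij.
      have hdir : S2n_dir E E1 E2 (inl i, @opt n d) (inr j, None).
        by case: (@opt n d) => [?|] /=; rewrite ?hE ?E2ij.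
      have hS : [set ((inl i, @opt n d) : SV s t n); (inr j, None)] \in edges (S2n_adj E E1 E2).
        by apply: edgesI; rewrite /S2n_adj hdir.
      exists (inr (exist (fun A => A \in edges (S2n_adj E E1 E2)) _ hS)).
      rewrite (Lab_edge g c hS hdir) /= cp_opt // addn0 /d sgK (fe_eq g hA) gz.
      by rewrite subKn // -em.
pose L' := fun w => Ordinal (Llt w).
have L'inj : injective L' by move=> a b /(congr1 val) /Linj.
have Hcard : n.+1 * P = #|{: lab_dom (@S2n_adj s t n E E1 E2)}|.
  apply/eqP; rewrite eqn_leq; apply/andP; split; last first.
    by rewrite -[X in _ <= X](card_ord (n.+1 * P)); apply: leq_card L'inj.
  have : [set L' w | w in [set: lab_dom (@S2n_adj s t n E E1 E2)]] = setT.
    apply/setP => m; rewrite inE; have [w hw] := Lsurj m (ltn_ord m).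
    apply/imsetP; exists w; rewrite ?inE //; apply: val_inj; by rewrite /= hw.
  move=> eS; have := card_imset (mem [set: lab_dom (@S2n_adj s t n E E1 E2)]) L'inj.
  by rewrite eS !cardsT card_ord => ->.
have key (u v : SV s t n) (h : [set u; v] \in edges (S2n_adj E E1 E2)) :
  S2n_dir E E1 E2 u v ->
  (@Lab s t n E E1 E2 g c (inl u)).+1 + (@Lab s t n E E1 E2 g c (inr (exist (fun A => A \in edges (S2n_adj E E1 E2)) _ h))).+1
  + (@Lab s t n E E1 E2 g c (inl v)).+1 = n.+1 * (k - 3) + c + n + 3.
  move=> hd.
  have [[i [ox eu]] [j [oy ev]]] := dir_sides hd; subst u v.
  rewrite (Lab_edge g c h hd) /=.
  have hE := dir_E Hdec hd.
  have hG : [set (inl i : 'I_s + 'I_t); inr j] \in edges (bip_adj E) by apply: edgesI.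
  rewrite (fe_eq g hG) -(fval _ _ hG hE) /g.
  set a1 := nat_of_ord _; set a2 := nat_of_ord _; set a3 := nat_of_ord _.
  have -> : a1.+1 + a2.+1 + a3.+1 - 3 = a1 + a2 + a3 by lia.
  rewrite !mulnDr.
  have [[e0|e0] hs] := dir_cp hd; rewrite e0 ?add0n ?addn0 in hs *;
    have := sgle _ hs; rewrite (_ : sg c 0 = c) //; set z := sg c _;
    set b1 := n.+1 * a1; set b2 := n.+1 * a2; set b3 := n.+1 * a3; lia.
exists (fun w => cast_ord Hcard (L' w)); split.
  apply: inj_card_bij; last by rewrite card_ord -Hcard.
  by move=> a b /(congr1 val) /= /Linj.
move=> x y hxy; rewrite /S2n_adj => /orP [h|h].
  exact: key.
have hyx : [set y; x] \in edges (S2n_adj E E1 E2) by rewrite setUC.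
have -> : exist (fun A => A \in edges (S2n_adj E E1 E2)) [set x; y] hxy =
          exist (fun A => A \in edges (S2n_adj E E1 E2)) [set y; x] hyx.
  by apply: val_inj; rewrite /= setUC.
have := key _ _ hyx h; rewrite /=; lia.
Qed.

Theorem mainTheorem13 (s t : nat) (E E1 E2 : 'I_s -> 'I_t -> bool)
  (Hdec : forall i j, E i j = E1 i j || E2 i j)
  (Hdisj : forall i j, ~~ (E1 i j && E2 i j))
  (Hmagic : edge_magic (bip_adj E)) :
  forall M : nat, exists N : nat, forall n : nat, N <= n ->
    tau_card_ge (@S2n_adj s t n E E1 E2) M.
Proof.
move=> M; exists M => n Hn.
case: Hmagic => k Hk.
exists [seq n.+1 * (k - 3) + c + n + 3 | c <- iota 0 n.+1]; split.
- rewrite map_inj_uniq ?iota_uniq // => a b; lia.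
- by rewrite size_map size_iota leqW.
- move=> v /mapP [c]; rewrite mem_iota add0n ltnS => /andP [_ Hc] ->.
  exact: S_valence.
Qed.
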